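(* Let $n$ and $k$ be integers with $3\le k\le n-1$, and let $CT\in\mathcal{CT}_{n,k}$. Then \[ M_1(CT)\le\begin{cases}4n+2k-10 & \text{if } k\equiv 0 \pmod 3,\\ 4n+2k-8 & \text{if } k\equiv 1 \pmod 3,\\ 4n+2k-12 & \text{if } k\equiv 2 \pmod 3.\end{cases} \] Equality holds if and only if $CT$ contains exactly one vertex of degree $3$ when $k\equiv 0 \pmod 3$, no vertex of degree $3$ when $k\equiv 1\pmod 3$, and exactly two vertices of degree $3$ when $k\equiv 2\pmod 3$.
   Context: All graphs are simple and connected. A chemical tree is a tree with maximum degree at most $4$. $d_v$ denotes the degree of a vertex $v$. A vertex of degree $1$ is pendent; a vertex of degree greater than $2$ is branching. A segment of a tree $T$ is a path of positive length in $T$ neither of whose end vertices has degree $2$ and all of whose internal vertices (if any) have degree $2$. $\mathcal{CT}_{n,k}$ denotes the class of all $n$-vertex chemical trees having exactly $k$ segments. The first Zagreb index is $M_1(G)=\sum_{v\in V(G)}d_v^2$. *)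

(* Defs.v *)
From mathcomp Require Import all_boot.
Set Implicit Arguments. Unset Strict Implicit. Unset Printing Implicit Defensive.

Section Graphs.
Variables (T : finType) (e : rel T).

(* simple graph: e symmetric and irreflexive (assumed in the theorem) *)
Definition deg (v : T) : nat := #|[set w | e v w]|.

Definition connected_graph : Prop := forall x y : T, connect e x y.

Definition acyclic : Prop :=
  forall (x : T) (p : seq T), uniq (x :: p) -> 2 <= size p -> ~~ cycle e (x :: p).

Definition is_tree : Prop := connected_graph /\ acyclic.

Definition chemical : Prop := forall v : T, deg v <= 4.

Definition is_segment (u : T) (p : seq T) : bool :=
  [&& path e u p, uniq (u :: p), p != [::],
      deg u != 2, deg (last u p) != 2 &
      all (fun x => deg x == 2) (behead (belast u p))].

(* In a tree a path is determined by its end vertices, so a segment is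
   identified with the (unordered) pair of its end vertices. *)
Definition segment_ends (S : {set T}) : Prop :=
  exists u p, is_segment u p /\ S = [set u; last u p].

Definition num_segments (k : nat) : Prop :=
  exists L : seq {set T}, [/\ uniq L, size L = k & forall S, S \in L <-> segment_ends S].

Definition M1 : nat := \sum_(v : T) deg v ^ 2.

End Graphs.

Definition M1_bound (n k : nat) : nat :=
  if k %% 3 == 0 then 4 * n + 2 * k - 10
  else if k %% 3 == 1 then 4 * n + 2 * k - 8
  else 4 * n + 2 * k - 12.

Definition num_deg3_extremal (k : nat) : nat :=
  if k %% 3 == 0 then 1 else if k %% 3 == 1 then 0 else 2.

(* Main.v *)
Require Import Defs.
From mathcomp Require Import all_boot zify.
Set Implicit Arguments. Unset Strict Implicit. Unset Printing Implicit Defensive.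

Lemma sum_pick (T : finType) (b : bool) (a : T) : \sum_(w : T) (b && (w == a) : nat) = b.
Proof.
rewrite (bigD1 a) //= eqxx andbT big1 ?addn0 // => w /negbTE ->; by rewrite andbF.
Qed.
Lemma cnt (T : finType) (r : T) : \sum_(v : T) (v != r : nat) = #|T|.-1.
Proof.
rewrite -(cardC1 r) -sum1_card [RHS]big_mkcond /=; apply: eq_bigr => v _; by rewrite !inE; case: (v != r).
Qed.
Lemma degE (T : finType) (P : pred T) : #|[set w | P w]| = \sum_w (P w : nat).
Proof.
rewrite -sum1_card big_mkcond /=; apply: eq_bigr => v _; rewrite in_set; by case: (P v).
Qed.

Section Tree.
Variables (T : finType) (e : rel T).
Hypothesis hsym : symmetric e.
Hypothesis eirr : irreflexive e.
Hypothesis econn : connected_graph e.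
Hypothesis eacyc : acyclic e.
Variable r : T.

Fixpoint reach (n : nat) : {set T} :=
  if n is n'.+1 then reach n' :|: [set y | [exists x in reach n', e x y]]
  else [set r].

Lemma reach_step n x y : x \in reach n -> e x y -> y \in reach n.+1.
Proof.
move=> hx hxy; rewrite /= in_setU; apply/orP; right.
rewrite in_set; apply/existsP; exists x; by rewrite hx hxy.
Qed.

Lemma reach_path p x n : x \in reach n -> path e x p -> last x p \in reach (n + size p).
Proof.
elim: p x n => [|y p IH] x n hx /=; first by rewrite addn0.
move=> /andP[hxy hp]; rewrite addnS -addSn; apply: IH hp.
exact: reach_step hxy.
Qed.

Lemma ex_reach v : exists n, v \in reach n.
Proof.
have /connectP [p hp ->] := econn r v.
exists (0 + size p); apply: reach_path hp; by rewrite /= in_set1.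
Qed.

Definition dist v := ex_minn (ex_reach v).

Lemma dist_reach v : v \in reach (dist v).
Proof. by rewrite /dist; case: ex_minnP. Qed.

Lemma dist_min v n : v \in reach n -> dist v <= n.
Proof. rewrite /dist; case: ex_minnP => m _ hm; exact: hm. Qed.

Lemma dist_edge x y : e x y -> dist y <= (dist x).+1.
Proof. move=> hxy; apply: dist_min; exact: reach_step (dist_reach x) hxy. Qed.

Lemma dist0 v : (dist v == 0) = (v == r).
Proof.
apply/idP/idP.
  move/eqP=> h; have := dist_reach v; by rewrite h /= in_set1.
move/eqP->; rewrite -leqn0; apply: dist_min; by rewrite /= in_set1.
Qed.

Lemma dist_r : dist r = 0.
Proof. by apply/eqP; rewrite dist0. Qed.

Lemma exists_parent x : x != r -> exists y, e y x && ((dist y).+1 == dist x).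
Proof.
rewrite -dist0 => hx.
have hr := dist_reach x.
move: hr; case hd: (dist x) => [|d] //=; first by rewrite hd in hx.
rewrite in_setU => /orP[hx'|].
  have := dist_min hx'; by rewrite hd ltnn.
rewrite in_set => /existsP[y /andP[hy hyx]]; exists y; rewrite hyx /=.
have h1 := dist_min hy; have h2 := dist_edge hyx; rewrite hd in h2.
apply/eqP; lia.
Qed.

Definition parent x :=
  if x == r then r else odflt r [pick y | e y x && ((dist y).+1 == dist x)].

Lemma parent_r : parent r = r.
Proof. by rewrite /parent eqxx. Qed.

Lemma parent_spec x : x != r -> e x (parent x) /\ (dist (parent x)).+1 = dist x.
Proof.
move=> hx; rewrite /parent (negbTE hx).
case: pickP => [y /andP[h1 /eqP h2]|h] /=.
  by rewrite hsym h1.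
have [y hy] := exists_parent hx; by rewrite h in hy.
Qed.

Lemma dist_parent x : dist (parent x) = (dist x).-1.
Proof.
case: (eqVneq x r) => [->|hx]; first by rewrite parent_r dist_r.
by have [_ <-] := parent_spec hx.
Qed.

Definition anc i x := iter i parent x.
Arguments anc : simpl never.

Lemma dist_anc i x : dist (anc i x) = dist x - i.
Proof.
elim: i => [|i IH]; first by rewrite subn0.
by rewrite /anc iterS -/(anc i x) dist_parent IH subnS.
Qed.

Lemma anc_dist x : anc (dist x) x = r.
Proof. by apply/eqP; rewrite -dist0 dist_anc subnn. Qed.

Lemma ancSr i x : anc i.+1 x = anc i (parent x).
Proof. by rewrite /anc iterSr. Qed.

Fixpoint chain n x := if n is n'.+1 then parent x :: chain n' (parent x) else [::].

Lemma size_chain n x : size (chain n x) = n.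
Proof. by elim: n x => [|n IH] x //=; rewrite IH. Qed.

Lemma last_chain n x : last x (chain n x) = anc n x.
Proof. elim: n x => [|n IH] x; first by []. by rewrite ancSr -IH. Qed.

Lemma belast_chain n x : belast x (chain n.+1 x) = x :: chain n x.
Proof.
elim: n x => [|n IH] x //=.
by have /= -> := IH (parent x).
Qed.

Lemma all_chain (P : pred T) n x :
  all P (chain n x) = [forall i : 'I_n, P (anc i.+1 x)].
Proof.
elim: n x => [|n IH] x /=.
  by apply/esym/forallP => -[].
rewrite IH; apply/andP/forallP.
  move=> [h1 /forallP h2] i; case: i => [[|i] hi] //=.
  by rewrite ancSr; have := h2 (Ordinal (hi : i < n)).
move=> h; split; first by have := h ord0.
apply/forallP => i; have := h (lift ord0 i); by rewrite /= ancSr.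
Qed.

Lemma mem_chain n x y : y \in x :: chain n x -> exists2 i, i <= n & y = anc i x.
Proof.
elim: n x => [|n IH] x /=.
  by rewrite inE => /eqP ->; exists 0.
rewrite inE => /orP[/eqP ->|]; first by exists 0.
move/IH=> [i hi ->]; exists i.+1 => //; by rewrite ancSr.
Qed.

Lemma path_chain n x : n <= dist x ->
  path (fun a b => e a b && (dist b < dist a)) x (chain n x).
Proof.
elim: n x => [|n IH] x //= hn.
have hx : x != r by rewrite -dist0 -lt0n; apply: leq_ltn_trans hn.
have [h1 h2] := parent_spec hx.
rewrite h1 -h2 ltnSn /=; apply: IH; lia.
Qed.

Lemma epath_chain n x : n <= dist x -> path e x (chain n x).
Proof. move/path_chain; apply: sub_path => a b /andP[]//. Qed.

Lemma uniq_chain n x : n <= dist x -> uniq (x :: chain n x).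
Proof.
move/path_chain => hp.
apply: (@sorted_uniq _ (fun a b => dist b < dist a)).
- move=> a b c h1 h2; exact: ltn_trans h2 h1.
- by move=> a; rewrite ltnn.
rewrite /=; move: hp; apply: sub_path => a b /andP[]//.
Qed.


Lemma anc_meet a b : dist a = dist b -> exists j, anc j a == anc j b.
Proof. move=> h; exists (dist a); by rewrite anc_dist h anc_dist. Qed.

Lemma cyc_path a b : a != b -> dist a = dist b ->
  exists q, [/\ path e a q, last a q = b, uniq (a :: q), 1 < size q &
              all (fun y => dist y <= dist a) q].
Proof.
move=> hab hd.
case: (ex_minnP (anc_meet hd)) => j hj hmin.
have jd : j <= dist a by apply: hmin; rewrite anc_dist hd anc_dist.
case: j hj hmin jd => [|j'] hj hmin jd; first by rewrite /anc /= (negbTE hab) in hj.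
set j := j'.+1 in hj hmin jd *.
have jdb : j <= dist b by rewrite -hd.
exists (chain j a ++ rev (belast b (chain j b))); split.
- rewrite cat_path epath_chain // last_chain (eqP hj) -last_chain rev_path.
  have hs : (fun z => e^~ z) =2 e by move=> u v /=; exact: hsym.
  rewrite (eq_path hs); exact: epath_chain.
- by rewrite last_cat belast_chain rev_cons last_rcons.
- rewrite -cat_cons cat_uniq rev_uniq uniq_chain // belast_chain uniq_chain ?andbT /=;
    last by apply: leq_trans jdb.
  apply/hasP => -[y]; rewrite mem_rev => hy1 hy2.
  have [i' hi' e1] := @mem_chain j' b y hy1; have [i hi e2] := @mem_chain j a y hy2.
  have heq : anc i a == anc i' b by rewrite -e1 -e2.
  have hi'd : i' <= dist a by apply: leq_trans jd; apply: leqW.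
  have hid : i <= dist a by apply: leq_trans jd.
  have := congr1 dist (eqP heq); rewrite !dist_anc -hd => hdd.
  have ei : i = i' by lia.
  subst i; have := hmin _ heq; lia.
- rewrite size_cat size_rev size_belast !size_chain /j; lia.
- rewrite all_cat all_rev belast_chain; apply/andP; split.
    rewrite all_chain; apply/forallP => i; rewrite dist_anc; exact: leq_subr.
  rewrite /= hd leqnn /= all_chain; apply/forallP => i; rewrite dist_anc; exact: leq_subr.
Qed.

Lemma no_cycle_edge a b : a != b -> dist a = dist b -> e a b -> False.
Proof.
move=> hab hd he; have [q [hp hl hu hs _]] := cyc_path hab hd.
have := eacyc hu hs; rewrite /cycle rcons_path hp hl /= hsym he; by [].
Qed.

Lemma no_cycle_vert x a b : a != b -> dist a = dist b -> e x a -> e x b ->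
  dist a < dist x -> False.
Proof.
move=> hab hd hxa hxb hlt; have [q [hp hl hu hs hall]] := cyc_path hab hd.
have hu' : uniq (x :: a :: q).
  rewrite cons_uniq hu andbT inE negb_or; apply/andP; split.
    by apply/eqP => h; rewrite h ltnn in hlt.
  apply/negP => hxq; have := allP hall _ hxq; lia.
have := eacyc hu'; rewrite /= ltnW //.
rewrite rcons_path hp hl hxa hsym hxb; by move=> /(_ isT).
Qed.

Lemma edge_orient x y : e x y -> y = parent x \/ x = parent y.
Proof.
move=> hxy; have hyx : e y x by rewrite hsym.
have h1 := dist_edge hxy; have h2 := dist_edge hyx.
have hne : x != y by apply/eqP => h; rewrite h eirr in hxy.
case: (ltngtP (dist x) (dist y)) => h.
- have hy : y != r by rewrite -dist0 -lt0n; apply: leq_ltn_trans h.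
  have [hp hdp] := parent_spec hy.
  case: (eqVneq (parent y) x) => [->|hpx]; first by right.
  exfalso; apply: (no_cycle_vert hpx _ hp hyx); lia.
- have hx : x != r by rewrite -dist0 -lt0n; apply: leq_ltn_trans h.
  have [hp hdp] := parent_spec hx.
  case: (eqVneq (parent x) y) => [->|hpy]; first by left.
  exfalso; apply: (no_cycle_vert hpy _ hp hxy); lia.
- exfalso; exact: no_cycle_edge hne h hxy.
Qed.

Lemma edge_split v w :
  (e v w : nat) = ((v != r) && (w == parent v)) + ((w != r) && (v == parent w)).
Proof.
have key1 : (v != r) && (w == parent v) -> e v w.
  by case/andP => hv /eqP ->; have [] := parent_spec hv.
have key2 : (w != r) && (v == parent w) -> e v w.
  by case/andP => hw /eqP ->; have [h _] := parent_spec hw; rewrite hsym.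
case: (boolP ((v != r) && (w == parent v))) => h1;
  case: (boolP ((w != r) && (v == parent w))) => h2.
- exfalso; move: h1 h2 => /andP[hv /eqP hw1] /andP[hw /eqP hv1].
  have [_ d1] := parent_spec hv; have [_ d2] := parent_spec hw.
  rewrite -hw1 in d1; rewrite -hv1 in d2; lia.
- by rewrite key1.
- by rewrite key2.
case hvw: (e v w) => //.
case: (edge_orient hvw) => h.
  case: (eqVneq v r) => hv.
    by subst v; rewrite h parent_r eirr in hvw.
  by rewrite hv h eqxx in h1.
case: (eqVneq w r) => hw.
  by subst w; rewrite h parent_r eirr in hvw.
by rewrite hw h eqxx in h2.
Qed.

Lemma deg_sum : \sum_v deg e v = 2 * #|T|.-1.
Proof.
under eq_bigr => v _ do rewrite /deg degE.
under eq_bigr => v _ do under eq_bigr => w _ do rewrite edge_split.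
under eq_bigr => v _ do rewrite big_split.
rewrite big_split /= [X in _ + X]exchange_big /=.
under eq_bigr => v _ do rewrite sum_pick.
by rewrite cnt mul2n addnn.
Qed.

Lemma deg3 y a b c : e y a -> e y b -> e y c -> a != b -> a != c -> b != c -> 3 <= deg e y.
Proof.
move=> ha hb hc h1 h2 h3.
have <- : #|a |: [set b; c]| = 3 by rewrite cardsU1 cards2 h3 !inE negb_or h1 h2.
apply: subset_leq_card; apply/subsetP => w; rewrite !inE => /or3P[] /eqP ->; by [].
Qed.

Lemma head_rcons_rev (q : seq T) u x : head x (rcons (rev q) u) = last u q.
Proof.
elim/last_ind: q => [|q z _] //=.
by rewrite rev_rcons rcons_cons last_rcons.
Qed.

Lemma up_chain p u : path (fun a b => b == parent a) u p -> p = chain (size p) u.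
Proof.
elim: p u => [|y p IH] u //= /andP[/eqP -> hp].
by rewrite -IH.
Qed.

Lemma down_path p x : path e x p -> uniq (x :: p) -> x = parent (head x p) ->
  path (fun a b => a == parent b) x p.
Proof.
elim: p x => [|y p IH] x //= /andP[hxy hp] hu hx.
rewrite hx eqxx /=; case: p IH hp hu => [|z p] IH hp hu //.
have hu' : uniq (y :: z :: p) by rewrite cons_uniq in hu; case/andP: hu.
apply: IH => //=.
move: hp => /= /andP[hyz _].
case: (edge_orient hyz) => // h.
by move: hu; rewrite h -hx !inE eqxx !orbT.
Qed.

Section Seg.
Hypothesis hrW : deg e r != 2.

Definition W := [set v | deg e v != 2].

Lemma exT v : exists i, anc i.+1 v \in W.
Proof.
exists (dist v).-1; case: (eqVneq v r) => [->|hv].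
  by rewrite dist_r /anc /= parent_r inE.
have hd : 0 < dist v by rewrite lt0n dist0.
by rewrite prednK // anc_dist inE.
Qed.

Definition m v := ex_minn (exT v).
Definition top v := anc (m v).+1 v.

Lemma top_W v : top v \in W.
Proof. by rewrite /top /m; case: ex_minnP. Qed.

Lemma m_min v i : anc i.+1 v \in W -> m v <= i.
Proof. rewrite /m; case: ex_minnP => j _ h; exact: h. Qed.

Lemma m_lt v : v != r -> m v < dist v.
Proof.
move=> hv; have hd : 0 < dist v by rewrite lt0n dist0.
suff : m v <= (dist v).-1 by lia.
by apply: m_min; rewrite prednK // anc_dist inE.
Qed.

Lemma dist_top v : v != r -> dist (top v) < dist v.
Proof. move=> hv; have := m_lt hv; rewrite /top dist_anc; lia. Qed.

Lemma seg_top v : v \in W -> v != r -> is_segment e v (chain (m v).+1 v).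
Proof.
move=> hvW hv; have hm := m_lt hv.
apply/and5P; split.
- exact: epath_chain.
- exact: uniq_chain.
- by [].
- by rewrite inE in hvW.
apply/andP; split.
  by rewrite last_chain; have := top_W v; rewrite inE.
rewrite belast_chain /= all_chain; apply/forallP => i.
apply/negPn/negP => hi.
have := m_min (i:=i) (v:=v); rewrite inE => /(_ hi); have := ltn_ord i; lia.
Qed.

Lemma up_path p u : path e u p -> uniq (u :: p) ->
  all (fun x => deg e x == 2) (behead (belast u p)) -> head u p = parent u ->
  path (fun a b => b == parent a) u p.
Proof.
elim: p u => [|y p IH] u //= /andP[huy hp] hu hall hy.
rewrite -hy eqxx /=; case: p IH hp hu hall => [|z p] IH hp hu hall //.
move: hall => /= /andP[hdy hall].
move: hp => /= /andP[hyz hp'].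
have hz : z = parent y.
  case: (edge_orient hyz) => // hyz'.
  exfalso.
  have hur : u != r by apply/eqP => h; subst u; rewrite parent_r in hy; rewrite hy eirr in huy.
  have hyr : y != r by apply/eqP => h; move: hrW; rewrite -h (eqP hdy).
  have hzr : z != r by apply/eqP => h; subst z; rewrite parent_r in hyz'; rewrite hyz' eqxx in hyr.
  have [_ du] := parent_spec hur; have [py dy] := parent_spec hyr; have [_ dz] := parent_spec hzr.
  rewrite -hy in du; rewrite -hyz' in dz.
  have h1 : u != z by move: hu; rewrite !inE !negb_or => /andP[/andP[_ /andP[]]]. 
  have h2 : u != parent y by apply/eqP => h; rewrite -h in dy; lia.
  have h3 : z != parent y by apply/eqP => h; rewrite -h in dy; lia.
  have := deg3 (y:=y) (etrans (hsym y u) huy) hyz py h1 h2 h3.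
  rewrite (eqP hdy) //.
apply: IH => //=.
- by rewrite hyz.
- by rewrite cons_uniq in hu; case/andP: hu.
Qed.

Lemma up_seg u p : is_segment e u p -> head u p = parent u -> u != r /\ last u p = top u.
Proof.
move=> /and5P[hp hu hne hdu /andP[hdl hall]] hh.
have hur : u != r.
  apply/eqP => h; subst u; rewrite parent_r in hh.
  by case: p hp hne hu hall hh hdl => //= y p /andP[hy _] _ _ _ hh _; rewrite hh eirr in hy.
split => //.
have hup := up_path hp hu hall hh.
have hpc := up_chain hup.
move: hne hdl hall; rewrite hpc; case: (size p) => [|s] // _.
rewrite last_chain belast_chain /= all_chain => hdl hall.
have h1 : m u <= s by apply: m_min; rewrite inE.
have h2 : s <= m u.
  rewrite leqNgt; apply/negP => hlt.
  have := forallP hall (Ordinal hlt); have := top_W u; by rewrite inE /top => /negbTE ->.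
by rewrite /top (@anti_leq (m u) s) ?h1.
Qed.

Lemma rev_seg u q w : is_segment e u (rcons q w) -> is_segment e w (rcons (rev q) u).
Proof.
move=> /and5P[hp hu hne hdu /andP[hdl hall]].
apply/and5P; split.
- have := rev_path e u (rcons q w); rewrite last_rcons belast_rcons rev_cons => ->.
  have hs : (fun z => e^~ z) =2 e by move=> a b /=; exact: hsym.
  by rewrite (eq_path hs).
- by rewrite -rev_cons -rev_rcons rev_uniq rcons_cons.
- by case: (rev q).
- by rewrite last_rcons in hdl.
apply/andP; split; first by rewrite last_rcons.
by rewrite belast_rcons /= all_rev; rewrite belast_rcons /= in hall.
Qed.

Lemma seg_surj S : segment_ends e S -> exists2 v, v \in W :\ r & S = [set v; top v].
Proof.
move=> [u [p [hs ->]]].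
have hs' := hs; move: hs' => /and5P[hp hu hne hdu /andP[hdl hall]].
have he : e u (head u p) by case: p hp hne {hs hu hdl hall} => //= y p /andP[].
case: (edge_orient he) => hh.
  have [hur ->] := up_seg hs hh.
  by exists u; rewrite // !inE hur hdu.
have hdn := down_path hp hu hh.
move: hs hdn hdl; case/lastP: p {hp hu hne hall he hh} => [|q w] // hs hdn hdl.
move: hdn; rewrite rcons_path => /andP[_ /eqP hw].
have hrs := rev_seg hs.
have [hwr hl] := up_seg hrs (etrans (head_rcons_rev q u w) hw).
rewrite last_rcons in hl; rewrite last_rcons in hdl.
exists w; first by rewrite !inE hwr hdl.
by rewrite -hl last_rcons setUC.
Qed.

Lemma seg_count k : num_segments e k -> k = #|W| - 1.
Proof.
move=> [L [huL hsL hL]].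
have -> : k = #|[set S in L]| by rewrite cardsE -hsL (card_uniqP huL).
have -> : [set S in L] = [set [set v; top v] | v in W :\ r].
  apply/setP => S; rewrite inE; apply/idP/imsetP.
    by move/hL/seg_surj.
  move=> [v hv ->]; apply/hL; move: hv; rewrite !inE => /andP[hvr hvW].
  exists v, (chain (m v).+1 v); split; first by apply: seg_top; rewrite ?inE.
  by rewrite last_chain.
rewrite card_in_imset.
  by rewrite (cardsD1 r W) inE hrW; lia.
move=> v v'; rewrite !inE => /andP[hv _] /andP[hv' _] heq.
have := dist_top hv; have := dist_top hv'.
have : v \in [set v'; top v'] by rewrite -heq !inE eqxx.
have : v' \in [set v; top v] by rewrite heq !inE eqxx.
rewrite !inE => /orP[/eqP ->//|/eqP h1] /orP[/eqP //|/eqP h2].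
rewrite -h1 -h2; lia.
Qed.

End Seg.

End Tree.

Lemma sum3 (T : finType) (F G H : T -> nat) :
  \sum_v (F v + G v + H v) = \sum_v F v + \sum_v G v + \sum_v H v.
Proof. by rewrite !big_split. Qed.
Lemma sum2 (T : finType) (F G : T -> nat) :
  \sum_v (F v + G v) = \sum_v F v + \sum_v G v.
Proof. by rewrite !big_split. Qed.
Lemma sumM (T : finType) a (F : T -> nat) : \sum_v (a * F v) = a * \sum_v F v.
Proof. by rewrite big_distrr. Qed.
Lemma sumC (T : finType) c : \sum_(v : T) c = c * #|T|.
Proof. by rewrite sum_nat_const mulnC. Qed.

Theorem theorem1 (T : finType) (e : rel T) (k : nat) :
  symmetric e -> irreflexive e ->
  is_tree e -> chemical e -> num_segments e k ->
  3 <= k -> k <= #|T| - 1 ->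
  M1 e <= M1_bound #|T| k /\
  (M1 e = M1_bound #|T| k <-> #|[set v | deg e v == 3]| = num_deg3_extremal k).
Proof.
move=> hsym hirr [hconn hacyc] hchem hnum hk hkn.
have hT : 0 < #|T| by lia.
have [r0 _] := card_gt0P hT.
have hsum := deg_sum hsym hirr hconn hacyc r0.
have [r hr] : exists r, deg e r != 2.
  case: (boolP [exists v, deg e v != 2]) => [/existsP//|/existsPn h].
  rewrite (eq_bigr (fun _ => 2)) in hsum; last by move=> v _; apply/eqP; move: (h v); rewrite negbK.
  rewrite sum_nat_const in hsum; change (#|T| * 2 = 2 * #|T|.-1) in hsum; lia.
have hkW := seg_count hsym hirr hconn hacyc hr hnum.
have hdeg1 : forall v, 0 < deg e v.
  move=> v.
  have [w hw] : exists w, w \in predC1 v by apply/card_gt0P; rewrite cardC1; lia.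
  have hvw : v != w by rewrite inE eq_sym in hw.
  have [hp _] := parent_spec hsym hconn hvw.
  by apply/card_gt0P; exists (parent hconn w v); rewrite inE.
have id1 : forall v, deg e v ^ 2 + 6 + 2 * (deg e v == 3) = 5 * deg e v + 2 * (deg e v != 2).
  move=> v; have := hdeg1 v; have := hchem v.
  by case: (deg e v) => [|[|[|[|[|d]]]]].
have id2 : forall v, (deg e v != 2 : nat) + deg e v = 2 + 2 * (deg e v == 3) + 3 * (deg e v == 4).
  move=> v; have := hdeg1 v; have := hchem v.
  by case: (deg e v) => [|[|[|[|[|d]]]]].
have s1 : \sum_v (deg e v ^ 2 + 6 + 2 * (deg e v == 3)) = \sum_v (5 * deg e v + 2 * (deg e v != 2)).
  by apply: eq_bigr => v _; exact: id1.
have s2 : \sum_v ((deg e v != 2 : nat) + deg e v) = \sum_v (2 + 2 * (deg e v == 3) + 3 * (deg e v == 4)).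
  by apply: eq_bigr => v _; exact: id2.
rewrite (sum3 (fun v => deg e v ^ 2) (fun _ => 6) (fun v => 2 * (deg e v == 3) : nat)) in s1.
rewrite (sum2 (fun v => 5 * deg e v) (fun v => 2 * (deg e v != 2) : nat)) in s1.
rewrite (sum2 (fun v => (deg e v != 2 : nat)) (fun v => deg e v)) in s2.
rewrite (sum3 (fun _ => 2) (fun v => 2 * (deg e v == 3) : nat) (fun v => 3 * (deg e v == 4) : nat)) in s2.
rewrite !sumM !sumC -!degE in s1 s2.
rewrite -/(M1 e) hsum in s1; rewrite hsum in s2.
have hW : #|W e| = #|[set v | deg e v != 2]| by [].
rewrite -hW in s1 s2.

rewrite /M1_bound /num_deg3_extremal.
set n3 := #|[set v | deg e v == 3]| in s1 s2 *.
set n4 := #|[set v | deg e v == 4]| in s2.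
set w := #|W e| in s1 s2 hkW.
case: ifP => h0; [|case: ifP => h1]; (split; [lia| split => H; lia]).
Qed.
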